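(* Let $\Phi:\mathbb{R}^N\to\mathbb{R}^M$ and $L:\mathbb{R}^P\to\mathbb{R}^N$ be linear operators, let $\|\cdot\|_A$ be a norm on $\mathbb{R}^P$ with dual norm $\|\cdot\|_A^*$, and set $R(x)=\|L^*x\|_A$. Let $x_0\in\mathbb{R}^N$, and assume $\|\cdot\|_A$ is decomposable at $u_0=L^*x_0$ with associated subspace $T_0$ and vector $e_0\in T_0$; let $S_0=T_0^\perp$. Assume there exist $\eta\in\mathbb{R}^M$ and $\alpha\in\partial\|\cdot\|_A(L^*x_0)$ with $\Phi^*\eta=L\alpha$ and $\|\alpha_{S_0}\|_A^*<1$, and that $\Phi$ is injective on $\ker(L_{S_0}^* )$. Then there exist constants $C_1>0$, $C_2>0$, independent of $\eta$ and $\alpha$, such that the following holds: for every $\varepsilon>0$, every $w\in\mathbb{R}^M$ with $\|w\|_2\le\varepsilon$, $y=\Phi x_0+w$, every $c>0$ and $\lambda=c\varepsilon$, any minimizer $x^\star$ of $\min_{x\in\mathbb{R}^N}\tfrac12\|y-\Phi x\|_2^2+\lambda R(x)$ satisfies $$\|x^\star-x_0\|_2\le C\varepsilon,\qquad C=C_1\bigl(2+c\|\eta\|_2\bigr)+C_2\frac{(1+c\|\eta\|_2/2)^2}{c\,(1-\|\alpha_{S_0}\|_A^* )}.$$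
   Context: For a subspace $V\subset\mathbb{R}^P$, $P_V$ denotes the orthogonal projector onto $V$, and $L_V=LP_V$, $L_V^*=P_VL^*$, $\alpha_V=P_V\alpha$ for $\alpha\in\mathbb{R}^P$. A norm $\|\cdot\|_A$ on $\mathbb{R}^P$ is decomposable at $u\in\mathbb{R}^P$ if (i) there exist a subspace $T\subset\mathbb{R}^P$ and a vector $e\in T$ such that $\partial\|\cdot\|_A(u)=\{\alpha\in\mathbb{R}^P:\ \alpha_T=e,\ \|\alpha_{T^\perp}\|_A^*\le 1\}$, and (ii) for every $z\in T^\perp$, $\|z\|_A=\sup\{\langle v,z\rangle: v\in T^\perp,\ \|v\|_A^*\le 1\}$. *)

(* Defs.v *)
(* R : realType, vectors of R^n are column vectors 'cV[R]_n,
   linear operators are matrices, adjoints are transposes. *)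
From mathcomp Require Import all_boot all_order all_algebra.
From mathcomp Require Import classical_sets reals.
Set Implicit Arguments.
Unset Strict Implicit.
Unset Printing Implicit Defensive.
Import Order.TTheory GRing.Theory Num.Theory.
Local Open Scope ring_scope.
Local Open Scope classical_set_scope.

Section Defs.
Variable R : realType.

Definition dotv n (u v : 'cV[R]_n) : R := \sum_(i < n) u i 0 * v i 0.

Definition norm2 n (v : 'cV[R]_n) : R := Num.sqrt (\sum_(i < n) v i 0 ^+ 2).

Definition is_norm n (nA : 'cV[R]_n -> R) : Prop :=
  [/\ forall x, 0 <= nA x,
      forall x, nA x = 0 -> x = 0,
      forall (a : R) x, nA (a *: x) = `|a| * nA x &
      forall x y, nA (x + y) <= nA x + nA y].

Definition dual_norm n (nA : 'cV[R]_n -> R) (a : 'cV[R]_n) : R :=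
  sup [set dotv a z | z in [set z | nA z <= 1]].

Definition subdiff n (f : 'cV[R]_n -> R) (u : 'cV[R]_n) : set 'cV[R]_n :=
  [set g | forall z, f u + dotv g (z - u) <= f z].

(* Pm is the orthogonal projector onto the subspace V = range Pm
   (V = {x | Pm x = x}, V^perp = {x | Pm x = 0}, P_{V^perp} = 1 - Pm). *)
Definition orth_projector n (Pm : 'M[R]_n) : Prop :=
  Pm *m Pm = Pm /\ Pm^T = Pm.

Definition decomposable_at n (nA : 'cV[R]_n -> R) (u : 'cV[R]_n)
    (PT : 'M[R]_n) (e : 'cV[R]_n) : Prop :=
  [/\ orth_projector PT,
      PT *m e = e,
      subdiff nA u =
        [set g | PT *m g = e /\ dual_norm nA ((1%:M - PT) *m g) <= 1] &
      forall z, PT *m z = 0 ->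
        nA z = sup [set dotv v z | v in
                      [set v | PT *m v = 0 /\ dual_norm nA v <= 1]]].

End Defs.

(* Main.v *)
Require Import Defs.
From mathcomp Require Import all_boot all_order all_algebra.
From mathcomp Require Import classical_sets reals.
From mathcomp Require Import all_classical all_reals all_analysis.
From mathcomp Require Import ring lra.
Import Order.TTheory GRing.Theory Num.Def Num.Theory.
Import numFieldTopology.Exports.
Local Open Scope ring_scope.
Local Open Scope classical_set_scope.
Set Implicit Arguments.
Unset Strict Implicit.
Unset Printing Implicit Defensive.

Section V.
Variable R : realType.
Implicit Types (n : nat).

Lemma dotvE n (u v : 'cV[R]_n) : dotv u v = (u^T *m v) 0 0.
Proof. by rewrite /dotv mxE; apply: eq_bigr => i _; rewrite mxE. Qed.

Lemma dotvC n (u v : 'cV[R]_n) : dotv u v = dotv v u.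
Proof. by rewrite /dotv; apply: eq_bigr => i _; rewrite mulrC. Qed.

Lemma dotvDl n (u v w : 'cV[R]_n) : dotv (u + v) w = dotv u w + dotv v w.
Proof. by rewrite /dotv -big_split; apply: eq_bigr => i _; rewrite mxE mulrDl. Qed.

Lemma dotvZl n a (u w : 'cV[R]_n) : dotv (a *: u) w = a * dotv u w.
Proof. by rewrite /dotv mulr_sumr; apply: eq_bigr => i _; rewrite mxE mulrA. Qed.

Lemma dotvNl n (u w : 'cV[R]_n) : dotv (- u) w = - dotv u w.
Proof. by rewrite -scaleN1r dotvZl mulN1r. Qed.

Lemma dotvBl n (u v w : 'cV[R]_n) : dotv (u - v) w = dotv u w - dotv v w.
Proof. by rewrite dotvDl dotvNl. Qed.

Lemma dotvDr n (u v w : 'cV[R]_n) : dotv w (u + v) = dotv w u + dotv w v.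
Proof. by rewrite !(dotvC w) dotvDl. Qed.

Lemma dotvBr n (u v w : 'cV[R]_n) : dotv w (u - v) = dotv w u - dotv w v.
Proof. by rewrite !(dotvC w) dotvBl. Qed.

Lemma dotvZr n a (u w : 'cV[R]_n) : dotv w (a *: u) = a * dotv w u.
Proof. by rewrite !(dotvC w) dotvZl. Qed.

Lemma dotv0l n (u : 'cV[R]_n) : dotv 0 u = 0.
Proof. by rewrite -(scale0r 0) dotvZl mul0r. Qed.

Lemma dotv_mul m n (A : 'M[R]_(m, n)) u v : dotv (A *m u) v = dotv u (A^T *m v).
Proof. by rewrite !dotvE trmx_mul mulmxA. Qed.

Lemma norm2_ge0 n (v : 'cV[R]_n) : 0 <= norm2 v.
Proof. exact: sqrtr_ge0. Qed.

Lemma dotv_self_ge0 n (v : 'cV[R]_n) : 0 <= dotv v v.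
Proof. by apply: sumr_ge0 => i _; rewrite -expr2 sqr_ge0. Qed.

Lemma norm2_sq n (v : 'cV[R]_n) : norm2 v ^+ 2 = dotv v v.
Proof.
rewrite /norm2 sqr_sqrtr; last by apply: sumr_ge0 => i _; rewrite sqr_ge0.
by apply: eq_bigr => i _; rewrite expr2.
Qed.

Lemma norm2_eq0 n (v : 'cV[R]_n) : norm2 v = 0 -> v = 0.
Proof.
move=> /eqP; rewrite /norm2 sqrtr_eq0 => h.
have h0 : \sum_(i < n) v i 0 ^+ 2 = 0.
  by apply/eqP; rewrite eq_le h sumr_ge0 // => i _; rewrite sqr_ge0.
have := psumr_eq0P (fun i _ => sqr_ge0 (v i 0)) h0 => hi.
apply/matrixP => i j; rewrite (ord1 j) mxE; apply/eqP.
by rewrite -sqrf_eq0 hi.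
Qed.

Lemma norm2Z n a (v : 'cV[R]_n) : norm2 (a *: v) = `|a| * norm2 v.
Proof.
rewrite /norm2 -sqrtr_sqr -sqrtrM ?sqr_ge0 // mulr_sumr.
by congr Num.sqrt; apply: eq_bigr => i _; rewrite mxE exprMn.
Qed.

Lemma norm2N n (v : 'cV[R]_n) : norm2 (- v) = norm2 v.
Proof. by rewrite -scaleN1r norm2Z normrN normr1 mul1r. Qed.

Lemma norm2_0 n : norm2 (0 : 'cV[R]_n) = 0.
Proof. by rewrite -(scale0r 0) norm2Z normr0 mul0r. Qed.

Lemma norm2_sqD n (u v : 'cV[R]_n) :
  norm2 (u + v) ^+ 2 = norm2 u ^+ 2 + 2 * dotv u v + norm2 v ^+ 2.
Proof.
rewrite !norm2_sq !dotvDl !dotvDr (dotvC v u); ring.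
Qed.

Lemma cauchy_schwarz n (u v : 'cV[R]_n) : dotv u v <= norm2 u * norm2 v.
Proof.
have [p0|pn] := eqVneq (norm2 u) 0.
  by rewrite (norm2_eq0 p0) dotv0l norm2_0 mul0r.
have [r0|rn] := eqVneq (norm2 v) 0.
  by rewrite (norm2_eq0 r0) dotvC dotv0l norm2_0 mulr0.
have p0 : 0 < norm2 u by rewrite lt_def pn norm2_ge0.
have r0 : 0 < norm2 v by rewrite lt_def rn norm2_ge0.
have := dotv_self_ge0 (norm2 v *: u - norm2 u *: v).
rewrite !dotvBl !dotvBr !dotvZl !dotvZr -!norm2_sq (dotvC v u).
set p := norm2 u; set r := norm2 v; set d := dotv u v => h.
have : 0 <= 2 * p * r * (p * r - d) by nra.
rewrite pmulr_rge0; first by rewrite subr_ge0.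
by rewrite !mulr_gt0.
Qed.

Lemma norm2D n (u v : 'cV[R]_n) : norm2 (u + v) <= norm2 u + norm2 v.
Proof.
have h := norm2_sqD u v; have hc := cauchy_schwarz u v.
have h1 := norm2_ge0 (u + v); have h2 := norm2_ge0 u; have h3 := norm2_ge0 v.
nra.
Qed.

End V.

Section S.
Variable R : realType.

Lemma entry_le_norm m n (x : 'M[R]_(m,n)) i j : `|x i j| <= `|x|.
Proof.
by rewrite [leRHS]/normr /= mx_normrE; apply/bigmax_geP; right => /=; exists (i,j).
Qed.

Variable n : nat.
Variable f : 'rV[R]_n -> R.
Hypothesis f0 : forall x, 0 <= f x.
Hypothesis fdef : forall x, f x = 0 -> x = 0.
Hypothesis fZ : forall (a : R) x, f (a *: x) = `|a| * f x.
Hypothesis fD : forall x y, f (x + y) <= f x + f y.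

Lemma f_sum (I : Type) (r : seq I) (F : I -> 'rV[R]_n) :
  f (\sum_(i <- r) F i) <= \sum_(i <- r) f (F i).
Proof.
elim: r => [|a r IH]; first by rewrite !big_nil -(scale0r 0) fZ normr0 mul0r.
rewrite !big_cons; apply: le_trans (fD _ _) _; exact: lerD.
Qed.

Lemma f_upper : exists B, 0 <= B /\ forall x, f x <= B * `|x|.
Proof.
exists (\sum_(i < n) f (delta_mx 0 i)); split; first by apply: sumr_ge0.
move=> x; rewrite {1}(row_sum_delta x) mulr_suml.
apply: le_trans (f_sum _ _) _; apply: ler_sum => i _.
by rewrite fZ mulrC ler_wpM2l // entry_le_norm.
Qed.

Lemma fN x : f (- x) = f x.
Proof. by rewrite -scaleN1r fZ normrN normr1 mul1r. Qed.

Lemma f_lip x y : `|f x - f y| <= f (x - y).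
Proof.
have h1 := fD (x - y) y; rewrite subrK in h1.
have h2 := fD x (y - x); rewrite addrC subrK -opprB fN in h2.
rewrite ler_norml; apply/andP; split; lra.
Qed.

Lemma f_cont : continuous f.
Proof.
have [B [B0 HB]] := f_upper.
move=> x.
apply: (proj2 (@cvgrPdist_lt _ R^o _ (nbhs x) _ f (f x))) => e e0.
have eB : 0 < e / (B + 1) by apply: divr_gt0 => //; lra.
near=> y.
apply: le_lt_trans (f_lip _ _) _.
apply: le_lt_trans (HB _) _.
have : `|x - y| < e / (B + 1).
  near: y.
  exact: (@cvgr_dist_lt _ _ _ (nbhs x) _ id x (@cvg_id _ _) _ eB).
rewrite ltr_pdivlMr; last lra.
move=> h; apply: le_lt_trans h; rewrite mulrC; apply: ler_wpM2l => //; lra.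
Unshelve. all: by end_near.
Qed.
Lemma f_lower : exists k, 0 < k /\ forall x, k * `|x| <= f x.
Proof.
case: (pselect (exists x : 'rV[R]_n, x != 0)) => [[x0 x0nz]|h]; last first.
  exists 1; split => // x.
  have [->|hx] := eqVneq x 0; last by exfalso; apply: h; exists x.
  by rewrite normr0 mulr0 f0.
have unit_norm : forall x : 'rV[R]_n, x != 0 -> `| `|x|^-1 *: x| = 1.
  move=> x xnz; rewrite normrZ ger0_norm ?invr_ge0 // mulVf //.
  by rewrite normr_eq0.
pose A := [set x : 'rV[R]_n | `|x| = 1].
have An : A !=set0 by exists (`|x0|^-1 *: x0); exact: unit_norm.
have Ac : compact A.
  apply: bounded_closed_compact.
    suff : [bounded x | x in A] by [].
    rewrite /bounded_near; near=> M => x Ax; rewrite /= Ax.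
    near: M; exact: nbhs_pinfty_ge.
  have : closed ((fun x : 'rV[R]_n => `|x|) @^-1` [set (1:R)]).
    apply: preimage_closed; last exact: closed_eq.
    by move=> ? _; exact: norm_continuous.
  by [].
have fc : {within A, continuous f} by apply: continuous_subspaceT; exact: f_cont.
have [c cA cmin] := compact_EVT_min An Ac fc.
have c1 : `|c| = 1 by move: cA; rewrite inE.
exists (f c); split.
  rewrite lt_def f0 andbT; apply/negP => /eqP /fdef c0.
  by move: c1; rewrite c0 normr0 => /eqP; rewrite eq_sym oner_eq0.
move=> x; have [->|xnz] := eqVneq x 0; first by rewrite normr0 mulr0 f0.
have -> : f x = `|x| * f (`|x|^-1 *: x).
  by rewrite fZ ger0_norm ?invr_ge0 // mulrA mulfV ?mul1r // normr_eq0.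
rewrite mulrC ler_wpM2l //; apply: cmin; rewrite inE; exact: unit_norm.
Unshelve. all: by end_near.
Qed.
End S.

Section NE.
Variable R : realType.

Lemma norm2_le_mx n (z : 'cV[R]_n) : norm2 z <= Num.sqrt (n%:R) * `|z^T|.
Proof.
rewrite /norm2 -(ger0_norm (normr_ge0 (z^T))) -sqrtr_sqr -sqrtrM ?ler0n //.
rewrite ler_sqrt; last by rewrite mulr_ge0 ?ler0n ?sqr_ge0.
rewrite (_ : n%:R * _ = \sum_(i < n) `|z^T| ^+ 2); last by rewrite sumr_const card_ord mulr_natl.
apply: ler_sum => i _.
have h : `|z i 0| <= `|z^T| by have := entry_le_norm (z^T) 0 i; rewrite mxE.
rewrite -(real_normK (num_real (z i 0))).
have h0 := normr_ge0 (z i 0); nra.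
Qed.

Lemma norm_lower n (g : 'cV[R]_n -> R) : is_norm g ->
  exists k, 0 < k /\ forall z, k * norm2 z <= g z.
Proof.
case=> g0 gdef gZ gD.
pose f (r : 'rV[R]_n) := g r^T.
have [kf [kf0 hk]] : exists k, 0 < k /\ forall x, k * `|x| <= f x.
  apply: f_lower.
  - by move=> x; exact: g0.
  - by move=> x /gdef h; rewrite -(trmxK x) h linear0.
  - by move=> a x; rewrite /f linearZ /= gZ.
  - by move=> x y; rewrite /f linearD /= gD.
have s0 : 0 <= Num.sqrt (n%:R : R) by apply: sqrtr_ge0.
exists (kf / (Num.sqrt n%:R + 1)); split.
  by apply: divr_gt0 => //; lra.
move=> z; have := hk z^T; rewrite /f trmxK => h.
apply: le_trans h.
have hz := norm2_le_mx z.
have m0 : 0 <= `|z^T| by apply: normr_ge0.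
have hq : kf / (Num.sqrt n%:R + 1) * (Num.sqrt n%:R + 1) = kf.
  by rewrite mulfVK //; apply/eqP => h; lra.
have q0 : 0 <= kf / (Num.sqrt n%:R + 1) by apply: divr_ge0; lra.
move: hq q0; set q := kf / _ => hq q0.
rewrite -hq; nra.
Qed.

End NE.

Section Dual.
Variable R : realType.

Lemma is_norm0 n (nA : 'cV[R]_n -> R) : is_norm nA -> nA 0 = 0.
Proof. by case=> _ _ hZ _; rewrite -(scale0r 0) hZ normr0 mul0r. Qed.

Lemma dual_ub n (nA : 'cV[R]_n -> R) a z : is_norm nA -> nA z <= 1 ->
  dotv a z <= dual_norm nA a.
Proof.
move=> hn hz; have [k [k0 hk]] := norm_lower hn.
apply: ub_le_sup; last by exists z.
exists (norm2 a / k) => _ [z' /= hz' <-].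
apply: le_trans (cauchy_schwarz _ _) _.
have hr : norm2 a / k * k = norm2 a by rewrite mulfVK // gt_eqF.
have r0 : 0 <= norm2 a / k by rewrite divr_ge0 ?norm2_ge0 // ltW.
have := hk z'; have := norm2_ge0 z'.
move: hr r0; set r := norm2 a / k => hr r0.
rewrite -hr; nra.
Qed.

Lemma dual_le n (nA : 'cV[R]_n -> R) a B : is_norm nA ->
  (forall z, nA z <= 1 -> dotv a z <= B) -> dual_norm nA a <= B.
Proof.
move=> hn hB; apply: ge_sup.
  by exists (dotv a 0), 0 => //=; rewrite is_norm0.
by move=> _ [z /= hz <-]; exact: hB.
Qed.

End Dual.
Section Arith.
Variable R : realType.
Lemma final_arith (kA kB c eps t Ne a s nh b : R) :
  0 < kA -> 0 < kB -> 0 < c -> 0 < eps -> 0 < t -> 0 <= Ne -> 0 <= s -> 0 <= a ->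
  b = eps * (1 + c * Ne) -> a <= 2 * b -> c * eps * t * kA * s <= b ^+ 2 / 2 ->
  kB * nh <= a + s ->
  nh <= (2 / kB * (2 + c * Ne) + 2 / (kA * kB) * (1 + c * Ne / 2) ^+ 2 / (c * t)) * eps.
Proof.
move=> kA0 kB0 c0 eps0 t0 Ne0 s0 a0 -> hab hX hn.
have m0 : 0 <= c * Ne by rewrite mulr_ge0 // ltW.
move: hab hX hn; set m := c * Ne => hab hX hn.
have Z0 : 0 < c * t * kA by rewrite !mulr_gt0.
set Z := c * t * kA in Z0.
have hX' : eps * (Z * s) <= eps * (eps * (2 + m) ^+ 2 / 2).
  have -> : eps * (Z * s) = c * eps * t * kA * s by rewrite /Z; ring.
  apply: le_trans hX _.
  rewrite !expr2; nra.
rewrite ler_pM2l // in hX'.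
have hs : s <= eps * (2 + m) ^+ 2 / (2 * Z).
  rewrite ler_pdivlMr; last by rewrite mulr_gt0.
  lra.
have e : (2 / kB * (2 + m) + 2 / (kA * kB) * (1 + m / 2) ^+ 2 / (c * t)) * eps
         = (2 * (2 + m) * eps + eps * (2 + m) ^+ 2 / (2 * Z)) / kB.
  rewrite /Z; field.
  by rewrite !gt_eqF.
rewrite e ler_pdivlMr // mulrC.
lra.
Qed.
Lemma arith1 (Nw Wd a lam nx n0 E X : R) :
  2^-1 * Nw ^+ 2 + 2^-1 * (2 * - Wd) + 2^-1 * a ^+ 2 + lam * nx <= 2^-1 * Nw ^+ 2 + lam * n0 ->
  lam * n0 + (lam * E + lam * X) <= lam * nx ->
  a ^+ 2 / 2 + lam * X <= Wd - lam * E.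
Proof. move=> *. lra. Qed.
Lemma arith2 (Wd E a Nw Ne eps c X : R) : Wd <= a * Nw -> - E <= Ne * a ->
  Nw <= eps -> 0 <= a -> 0 <= Ne -> 0 < c -> 0 < eps -> 0 <= X ->
  a ^+ 2 / 2 + c * eps * X <= Wd - c * eps * E ->
  a <= 2 * (eps * (1 + c * Ne)) /\ c * eps * X <= (eps * (1 + c * Ne)) ^+ 2 / 2.
Proof.
move=> H3 H4 hw a0 Ne0 c0 e0 X0 Hm.
have lam0 : 0 < c * eps by rewrite mulr_gt0.
move: Hm lam0; set lam := c * eps => Hm lam0.
have H5 : Wd <= eps * a by nra.
have H6 : - (lam * E) <= lam * (Ne * a) by nra.
have Hb : a ^+ 2 / 2 + lam * X <= (eps * (1 + c * Ne)) * a.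
  have -> : (eps * (1 + c * Ne)) * a = eps * a + lam * (Ne * a) by rewrite /lam; ring.
  lra.
have X1 : 0 <= lam * X by rewrite mulr_ge0 // ltW.
have b0 : 0 < eps * (1 + c * Ne).
  by rewrite mulr_gt0 // ltr_pwDl // mulr_ge0 // ltW.
move: Hb b0; set b := eps * (1 + c * Ne) => Hb b0.
have sq := sqr_ge0 (a - b).
split; nra.
Qed.
End Arith.

Theorem theorem2 (R : realType) (N M P : nat)
    (Phi : 'M[R]_(M, N)) (L : 'M[R]_(N, P))
    (nA : 'cV[R]_P -> R) (x0 : 'cV[R]_N)
    (PT0 : 'M[R]_P) (e0 : 'cV[R]_P) :
  is_norm nA ->
  decomposable_at nA (L^T *m x0) PT0 e0 ->
  (exists (eta : 'cV[R]_M) (alpha : 'cV[R]_P),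
      alpha \in subdiff nA (L^T *m x0) /\
      Phi^T *m eta = L *m alpha /\
      dual_norm nA ((1%:M - PT0) *m alpha) < 1) ->
  (forall x1 x2 : 'cV[R]_N,
      (1%:M - PT0) *m L^T *m x1 = 0 ->
      (1%:M - PT0) *m L^T *m x2 = 0 ->
      Phi *m x1 = Phi *m x2 -> x1 = x2) ->
  exists C1 C2 : R, 0 < C1 /\ 0 < C2 /\
    forall (eta : 'cV[R]_M) (alpha : 'cV[R]_P),
      alpha \in subdiff nA (L^T *m x0) ->
      Phi^T *m eta = L *m alpha ->
      dual_norm nA ((1%:M - PT0) *m alpha) < 1 ->
      forall (eps : R) (w : 'cV[R]_M) (c : R) (xs : 'cV[R]_N),
        0 < eps -> norm2 w <= eps -> 0 < c ->
        let y := Phi *m x0 + w in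
        let lambda := c * eps in
        (forall x : 'cV[R]_N,
            2^-1 * norm2 (y - Phi *m xs) ^+ 2 + lambda * nA (L^T *m xs)
            <= 2^-1 * norm2 (y - Phi *m x) ^+ 2 + lambda * nA (L^T *m x)) ->
        norm2 (xs - x0) <=
          (C1 * (2 + c * norm2 eta)
           + C2 * (1 + c * norm2 eta / 2) ^+ 2
                  / (c * (1 - dual_norm nA ((1%:M - PT0) *m alpha)))) * eps.
Proof.
move=> hnA [[PP PTT] Pe hsub _] _ hinj.
have [kA [kA0 hkA]] := norm_lower hnA.
set S := 1%:M - PT0.
have ST : S^T = S by rewrite /S linearB /= trmx1 PTT.
have SS : S *m S = S.
  by rewrite /S mulmxBl mul1mx mulmxBr mulmx1 PP subrr subr0.
have PS : PT0 *m S = 0 by rewrite /S mulmxBr mulmx1 PP subrr.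
pose nB (x : 'cV[R]_N) := norm2 (Phi *m x) + norm2 (S *m L^T *m x).
have hnB : is_norm nB.
  split.
  - by move=> x; rewrite /nB addr_ge0 ?norm2_ge0.
  - move=> x hx.
    have h1 := norm2_ge0 (Phi *m x); have h2 := norm2_ge0 (S *m L^T *m x).
    have e1 : norm2 (Phi *m x) = 0 by rewrite /nB in hx; lra.
    have e2 : norm2 (S *m L^T *m x) = 0 by rewrite /nB in hx; lra.
    apply: hinj; first exact: norm2_eq0 e2.
      by rewrite mulmx0.
    by rewrite mulmx0; exact: norm2_eq0 e1.
  - by move=> a x; rewrite /nB -!scalemxAr !norm2Z mulrDr.
  - move=> x x'; rewrite /nB !mulmxDr.
    have := norm2D (Phi *m x) (Phi *m x'); have := norm2D (S *m L^T *m x) (S *m L^T *m x').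
    lra.
have [kB [kB0 hkB]] := norm_lower hnB.
exists (2 / kB), (2 / (kA * kB)); split; first by rewrite divr_gt0.
split; first by rewrite divr_gt0 // mulr_gt0.
move=> eta alpha ha heta hd eps w c xs eps0 hw c0 y lambda hmin.
rewrite /y /lambda in hmin => {y lambda}.
set d := dual_norm nA (S *m alpha).
set t := 1 - d.
have t0 : 0 < t by rewrite /t subr_gt0.
have Pa : PT0 *m alpha = e0.
  by move: ha; rewrite inE hsub => -[].
set h := xs - x0.
set v := S *m L^T *m h.
set s := norm2 v.
have s0 : 0 <= s by apply: norm2_ge0.
set q := (kA / s) *: v.
have Sv : S *m v = v by rewrite /v !mulmxA SS.
have Pv : PT0 *m v = 0 by rewrite /v !mulmxA PS !mul0mx.
have Sq : S *m q = q by rewrite /q -scalemxAr Sv.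
have Pq : PT0 *m q = 0 by rewrite /q -scalemxAr Pv scaler0.
have vv : dotv v (L^T *m h) = s ^+ 2.
  have vE : v = S *m (L^T *m h) by rewrite /v mulmxA.
  have e : dotv v v = dotv v (L^T *m h) by rewrite {1}vE dotv_mul ST Sv dotvC.
  by rewrite /s norm2_sq e.
have qLh : dotv q (L^T *m h) = kA * s.
  rewrite /q dotvZl vv; have [->|sn] := eqVneq s 0; first by rewrite expr0n /= !mulr0.
  by rewrite expr2 mulrA mulfVK.
have qz : forall z, nA z <= 1 -> dotv q z <= 1.
  move=> z hz; rewrite /q dotvZl.
  have [s00|sn] := eqVneq s 0.
    by rewrite s00 invr0 mulr0 mul0r.
  have spos : 0 < s by rewrite lt_def sn s0.
  have := cauchy_schwarz v z; rewrite -/s => hcs.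
  have := hkA z => hk.
  have hq : kA / s * s = kA by rewrite mulfVK.
  have q0 : 0 <= kA / s by rewrite divr_ge0 // ltW.
  move: hq q0; set r := kA / s => hq q0.
  have := norm2_ge0 z; nra.
set g := alpha + t *: q.
have hg : subdiff nA (L^T *m x0) g.
  rewrite hsub; split.
    by rewrite /g mulmxDr Pa -scalemxAr Pq scaler0 addr0.
  apply: dual_le => // z hz.
  rewrite -/S /g mulmxDr -scalemxAr Sq dotvDl dotvZl.
  have := dual_ub (S *m alpha) hnA hz; have := qz z hz.
  rewrite -/d; move: t0; rewrite /t; nra.
have k4 := hg (L^T *m xs).
have eLh : L^T *m xs - L^T *m x0 = L^T *m h by rewrite /h mulmxBr.
rewrite eLh /g dotvDl dotvZl qLh in k4.
have eal : dotv alpha (L^T *m h) = dotv eta (Phi *m h).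
  by rewrite -dotv_mul -heta dotv_mul trmxK.
rewrite eal in k4.
have hm := hmin x0.
have ey1 : Phi *m x0 + w - Phi *m xs = w + - (Phi *m h).
  by rewrite /h mulmxBr opprB addrA (addrC w).
have ey2 : Phi *m x0 + w - Phi *m x0 = w.
  by rewrite addrAC subrr add0r.
rewrite ey1 ey2 norm2_sqD norm2N dotvC dotvNl in hm.
have H3 := cauchy_schwarz (Phi *m h) w.
have H4 := cauchy_schwarz (- eta) (Phi *m h).
rewrite dotvNl norm2N in H4.
have a0 := norm2_ge0 (Phi *m h).
have Ne0 := norm2_ge0 eta.
have lam0 : 0 < c * eps by rewrite mulr_gt0.
move: hm k4 H3 H4 a0 Ne0 lam0.
set a := norm2 (Phi *m h); set Wd := dotv (Phi *m h) w; set E := dotv eta (Phi *m h).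
set Nw := norm2 w; set Ne := norm2 eta; set nx := nA (L^T *m xs); set n0 := nA (L^T *m x0).
set lam := c * eps => hm k4 H3 H4 a0 Ne0 lam0.
have k4' := ler_wpM2l (ltW lam0) k4.
have Hm : a ^+ 2 / 2 + lam * (t * (kA * s)) <= Wd - lam * E.
  rewrite !mulrDr in k4' hm; exact: (arith1 hm k4').
have X0 : 0 <= t * (kA * s) by rewrite !mulr_ge0 // ltW.
have [hab hX] := arith2 H3 H4 hw a0 Ne0 c0 eps0 X0 Hm.
have hX' : c * eps * t * kA * s <= (eps * (1 + c * Ne)) ^+ 2 / 2.
  by move: hX; rewrite !mulrA.
have hn : kB * norm2 h <= a + s by apply: hkB.
exact: (final_arith kA0 kB0 c0 eps0 t0 Ne0 s0 a0 erefl hab hX' hn).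
Qed.
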